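(* Let $n\ge3$. Suppose $\mathcal{CB}$ is a set of $\binom{n-1}{2}$ three-cycle graphs in $\mathbb G^n_A$, each of weight $1$, such that each member of $\mathcal{CB}$ contains an arc (unordered pair of vertices) that belongs to no other member of $\mathcal{CB}$. Then $\mathcal{CB}$ is a basis of $\mathbb C^n_A$, the orthogonal complement of $\mathbb{ST}^n_A$ in $\mathbb G^n_A$.
   Context: $\mathbb G^n_A$ is the space of complete weighted directed graphs without loops on vertices $V_1,\dots,V_n$ where arc $V_i\to V_j$ has weight $d_{i,j}$ with $d_{j,i}=-d_{i,j}$, identified with $\mathbb R^{\binom n2}$ via the entries $d_{i,j}$, $i<j$, with the standard inner product. $\mathbb{ST}^n_A$ is the $(n-1)$-dimensional subspace of strongly transitive graphs, i.e. those with $d_{i,j}+d_{j,k}=d_{i,k}$ for all distinct $i,j,k$. A three-cycle of weight $x$ on distinct vertices $V_a,V_b,V_c$ is the graph with $d_{a,b}=d_{b,c}=d_{c,a}=x$ (hence $d_{b,a}=d_{c,b}=d_{a,c}=-x$) and all other weights zero. *)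

(* Defs.v *)
From HB Require Import structures.
From mathcomp Require Import all_boot all_order all_algebra.
Set Implicit Arguments. Unset Strict Implicit. Unset Printing Implicit Defensive.
Import Order.TTheory GRing.Theory Num.Theory.
Local Open Scope ring_scope.

Definition Pairs (n : nat) := {p : 'I_n * 'I_n | (p.1 < p.2)%N}.

(* G^n_A, identified with R^{binom n 2} via the entries d_{i,j}, i < j. *)
(* R^o: R seen as a vector space over itself, so that the library's
   finite-dimensional vector space structure (vectType R) applies. *)
Notation Graph R n := {ffun Pairs n -> R^o}.

(* The weight d_{i,j} of the arc V_i -> V_j (antisymmetric; 0 on the diagonal). *)
Definition wt (R : realFieldType) (n : nat) (g : Graph R n) (i j : 'I_n) : R :=
  match @insub _ (fun p : 'I_n * 'I_n => (p.1 < p.2)%N) (Pairs n) (i, j) with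
  | Some p => g p
  | None =>
    match @insub _ (fun p : 'I_n * 'I_n => (p.1 < p.2)%N) (Pairs n) (j, i) with
    | Some p => - g p
    | None => 0
    end
  end.

Definition inner (R : realFieldType) (n : nat) (g h : Graph R n) : R :=
  \sum_(p : Pairs n) g p * h p.

Definition strongly_transitive (R : realFieldType) (n : nat) (g : Graph R n) : Prop :=
  forall i j k : 'I_n, i != j -> j != k -> i != k ->
    wt g i j + wt g j k = wt g i k.

Definition in_C (R : realFieldType) (n : nat) (g : Graph R n) : Prop :=
  forall s : Graph R n, strongly_transitive s -> inner g s = 0.

Definition three_cycle (R : realFieldType) (n : nat) (a b c : 'I_n) (x : R)
  : Graph R n :=
  [ffun p : Pairs n =>
     let i := (val p).1 in let j := (val p).2 in
     if ((i, j) == (a, b)) || ((i, j) == (b, c)) || ((i, j) == (c, a)) then x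
     else if ((j, i) == (a, b)) || ((j, i) == (b, c)) || ((j, i) == (c, a))
     then - x else 0].

Definition is_three_cycle (R : realFieldType) (n : nat) (g : Graph R n) (x : R)
  : Prop :=
  exists a b c : 'I_n, [/\ a != b, b != c, a != c & g = three_cycle a b c x].

Definition has_arc (R : realFieldType) (n : nat) (g : Graph R n) (u v : 'I_n)
  : Prop := u != v /\ wt g u v != 0.

(* Main.v *)
Require Import Defs.
From HB Require Import structures.
From mathcomp Require Import all_boot all_order all_algebra.
From mathcomp Require Import ring.
Import Order.TTheory GRing.Theory Num.Theory.
Local Open Scope ring_scope.
Set Implicit Arguments. Unset Strict Implicit.


Lemma card_Pairs n : #|{: Pairs n}| = 'C(n, 2).
Proof.
rewrite card_sig -sum1_card.
rewrite -(pair_big_dep (I:='I_n) (J:='I_n) xpredT (fun (i j : 'I_n) => (i < j)%N) (fun _ _ => 1%N)) /=.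
rewrite (exchange_big_dep xpredT) //=.
rewrite -bin2_sum big_mkord; apply: eq_bigr => j _.
have := big_ord_widen_cond (op := addn) (idx := 0%N) n xpredT (fun=> 1%N) (ltnW (ltn_ord j)).
rewrite /= sum1_card card_ord => H.
by rewrite [in RHS]H; apply: eq_bigl.
Qed.

Section S.
Variables (R : realFieldType) (n : nat).
Implicit Types (g h s : Graph R n).

Lemma wt_lt g (i j : 'I_n) (H : (i < j)%N) : wt g i j = g (Sub (i,j) H).
Proof. by rewrite /wt insubT. Qed.

Lemma wt_gt g (i j : 'I_n) (H : (j < i)%N) : wt g i j = - g (Sub (j,i) H).
Proof. by rewrite /wt insubF ?insubT //= ltnNge ltnW. Qed.

Lemma wt_eq g (i : 'I_n) : wt g i i = 0.
Proof. by rewrite /wt !insubF //= ltnn. Qed.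

Lemma wtN g (i j : 'I_n) : wt g i j = - wt g j i.
Proof.
case: (ltngtP i j) => H.
- by rewrite (wt_lt g H) (wt_gt g H) opprK.
- by rewrite (wt_lt g H) (wt_gt g H).
- by move/val_inj: H => ->; rewrite wt_eq oppr0.
Qed.

Lemma wtL (a : R) g h (i j : 'I_n) : wt (a *: g + h) i j = a * wt g i j + wt h i j.
Proof.
case: (ltngtP i j) => H.
- by rewrite !(wt_lt _ H) !ffunE.
- by rewrite !(wt_gt _ H) !ffunE /= opprD mulrN.
- by move/val_inj: H => ->; rewrite !wt_eq mulr0 addr0.
Qed.

Lemma wt0 (i j : 'I_n) : wt (0 : Graph R n) i j = 0.
Proof.
case: (ltngtP i j) => H.
- by rewrite !(wt_lt _ H) !ffunE.
- by rewrite !(wt_gt _ H) !ffunE oppr0.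
- by move/val_inj: H => ->; rewrite !wt_eq.
Qed.

Lemma innerL (a : R) g h s : inner (a *: g + h) s = a * inner g s + inner h s.
Proof.
rewrite /inner mulr_sumr -big_split /=; apply: eq_bigr => p _.
by rewrite !ffunE /= mulrDl mulrA.
Qed.

Lemma inner0 s : inner 0 s = 0.
Proof. by rewrite /inner big1 // => p _; rewrite ffunE mul0r. Qed.

Lemma innerC g h : inner g h = inner h g.
Proof. by apply: eq_bigr => p _; rewrite mulrC. Qed.

Lemma inner_self0 g : inner g g = 0 -> g = 0.
Proof.
move=> H; apply/ffunP => p; rewrite ffunE.
have := @psumr_eq0P _ _ xpredT (fun p => g p * g p) (fun p _ => sqr_ge0 (g p)) H p isT.
by move/eqP; rewrite mulf_eq0 orbb => /eqP.
Qed.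

Lemma span_pred (X : seq (Graph R n)) (P : Graph R n -> Prop) :
  P 0 -> (forall a u v, P u -> P v -> P (a *: u + v)) -> (forall x, x \in X -> P x) ->
  forall v, v \in <<X>>%VS -> P v.
Proof.
move=> P0 PL PX v /(@coord_span _ _ _ (in_tuple X)) ->.
elim/big_rec: _ => // i x _ Px; apply: PL => //.
by apply: PX; apply: mem_nth.
Qed.

Lemma ST0 : strongly_transitive (0 : Graph R n).
Proof. by move=> i j k _ _ _; rewrite !wt0 addr0. Qed.

Lemma STL a g h : strongly_transitive g -> strongly_transitive h ->
  strongly_transitive (a *: g + h).
Proof.
move=> Hg Hh i j k ij jk ik; rewrite !wtL -(Hg i j k) // -(Hh i j k) //.
ring.
Qed.

Lemma inC0 : in_C (0 : Graph R n).
Proof. by move=> s _; rewrite inner0. Qed.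

Lemma inCL a g h : in_C g -> in_C h -> in_C (a *: g + h).
Proof. by move=> Hg Hh s Hs; rewrite innerL Hg // Hh // mulr0 addr0. Qed.

Definition e1 (x y : 'I_n) : Graph R n :=
  [ffun p : Pairs n => if val p == (x,y) then 1 else if val p == (y,x) then -1 else 0].

Lemma inner_e1 (x y : 'I_n) s : x != y -> inner (e1 x y) s = wt s x y.
Proof.
move=> xy; case: (ltngtP x y) => H.
- rewrite /inner (bigD1 (Sub (x,y) H)) //= big1 ?addr0.
    by rewrite ffunE /= eqxx mul1r (wt_lt _ H).
  case=> [[i j] /= Hij] Hp; rewrite ffunE /=.
  case: eqP => [[ei ej]|_].
    by subst; rewrite (bool_irrelevance Hij H) eqxx in Hp.
  case: eqP => [[ei ej]|_]; last by rewrite mul0r.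
  by subst; move: (ltn_trans H Hij); rewrite ltnn.
- rewrite /inner (bigD1 (Sub (y,x) H)) //= big1 ?addr0.
    rewrite ffunE /= eqxx (wt_gt _ H).
    case: eqP => [[ei ej]|_]; last by rewrite mulN1r.
    by rewrite ej eqxx in xy.
  case=> [[i j] /= Hij] Hp; rewrite ffunE /=.
  case: eqP => [[ei ej]|_].
    by subst; move: (ltn_trans H Hij); rewrite ltnn.
  case: eqP => [[ei ej]|_]; last by rewrite mul0r.
  by subst; rewrite (bool_irrelevance Hij H) eqxx in Hp.
- by move/val_inj: H xy => ->; rewrite eqxx.
Qed.


Lemma three_cycle_dec (a b c : 'I_n) : a != b -> b != c -> a != c ->
  three_cycle a b c 1 = e1 a b + e1 b c + e1 c a.
Proof.
move=> ab bc ac; apply/ffunP => -[[i j] /= Hij]; rewrite !ffunE /=.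
rewrite !xpair_eqE.
move: (negbTE ab) (negbTE bc) (negbTE ac).
rewrite eq_sym [b == c]eq_sym [a == c]eq_sym => ba cb ca.
move: (negbTE ab) (negbTE bc) (negbTE ac) => ab' bc' ac'.
case: (eqVneq i a) => [?|/negbTE ?]; case: (eqVneq i b) => [?|/negbTE ?];
case: (eqVneq i c) => [?|/negbTE ?]; case: (eqVneq j a) => [?|/negbTE ?];
case: (eqVneq j b) => [?|/negbTE ?]; case: (eqVneq j c) => [?|/negbTE ?];
subst; rewrite ?eqxx;
repeat match goal with H : (_ == _) = false |- _ => progress rewrite H end;
rewrite /= ?addr0 ?add0r //;
match goal with H : (?x == ?x) = false |- _ => by rewrite eqxx in H end.
Qed.

Lemma three_cycle_inC (a b c : 'I_n) : a != b -> b != c -> a != c ->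
  in_C (three_cycle a b c (1 : R)).
Proof.
move=> ab bc ac s Hs; rewrite three_cycle_dec //.
rewrite -[e1 a b]scale1r -[1 *: e1 a b + _]scale1r !innerL !mul1r !inner_e1 //;
  last by rewrite eq_sym.
by rewrite Hs // [wt s c a]wtN subrr.
Qed.


Lemma arc_coord (u v : 'I_n) : u != v ->
  exists p : Pairs n, forall g, (wt g u v == 0) = (g p == 0).
Proof.
move=> uv; case: (ltngtP u v) => H.
- by exists (Sub (u,v) H) => g; rewrite (wt_lt _ H).
- by exists (Sub (v,u) H) => g; rewrite (wt_gt _ H) oppr_eq0.
- by move/val_inj: H uv => ->; rewrite eqxx.
Qed.

Lemma free_private (CB : seq (Graph R n)) : uniq CB ->
  (forall g, g \in CB -> exists u v : 'I_n,
      has_arc g u v /\ (forall h, h \in CB -> h != g -> ~ has_arc h u v)) ->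
  free CB.
Proof.
move=> uCB priv; apply/(@freeP _ _ _ (in_tuple CB)) => k Hk i.
have gin : CB`_i \in CB by apply: mem_nth.
have [u [v [[uv hg] hp]]] := priv _ gin.
have [p Hp] := arc_coord uv.
have := congr1 (fun f : Graph R n => f p) Hk.
rewrite sum_ffunE ffunE (bigD1 i) //= big1 ?addr0.
  move/eqP; rewrite ffunE scaler_eq0 -Hp (negbTE hg) orbF.
  by move/eqP.
move=> j ji; rewrite ffunE.
have hin : CB`_j \in CB by apply: mem_nth.
have hne : CB`_j != CB`_i by rewrite nth_uniq.
have : wt CB`_j u v == 0.
  by apply/negPn/negP => nz; apply: (hp _ hin hne).
by rewrite Hp => /eqP ->; rewrite scaler0.
Qed.
End S.

Section Pot.
Variables (R : realFieldType) (m : nat).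

Definition pot (f : 'I_m.+1 -> R) : Graph R m.+1 :=
  [ffun p : Pairs m.+1 => f (val p).2 - f (val p).1].

Lemma wt_pot f (i j : 'I_m.+1) : wt (pot f) i j = f j - f i.
Proof.
case: (ltngtP i j) => H.
- by rewrite (wt_lt _ H) ffunE.
- by rewrite (wt_gt _ H) ffunE opprB.
- by move/val_inj: H => ->; rewrite wt_eq subrr.
Qed.

Lemma pot_ST f : strongly_transitive (pot f).
Proof. by move=> i j k _ _ _; rewrite !wt_pot addrC addrA subrK. Qed.

Definition potX : m.-tuple (Graph R m.+1) :=
  [tuple pot (fun j => ((j == lift ord0 k)%:R : R)) | k < m].

Lemma potX_free : free potX.
Proof.
apply/freeP => c Hc k.
have H : ((ord0 : 'I_m.+1) < lift ord0 k)%N by [].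
have := congr1 (fun f : Graph R m.+1 => f (Sub (ord0, lift ord0 k) H)) Hc.
rewrite sum_ffunE ffunE (bigD1 k) //= big1 ?addr0.
  rewrite ffunE (nth_map k) ?size_enum_ord // nth_ord_enum !ffunE /= eqxx subr0 /=.
  by move=> /eqP; rewrite scaler_eq0 oner_eq0 orbF => /eqP.
move=> j jk; rewrite ffunE (nth_map k) ?size_enum_ord // nth_ord_enum !ffunE /=.
by rewrite (inj_eq lift_inj) eq_sym (negbTE jk) subr0 scaler0.
Qed.

End Pot.

Lemma potX_ST (R : realFieldType) m s : s \in <<potX R m>>%VS -> strongly_transitive s.
Proof.
apply: span_pred; [exact: ST0 | exact: STL|].
by move=> x /mapP[k _ ->]; exact: pot_ST.
Qed.

Lemma dim_Graph (R : realFieldType) n : \dim (fullv : {vspace Graph R n}) = 'C(n, 2).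
Proof. by rewrite dimvf /dim /= muln1 card_Pairs. Qed.

Unset Implicit Arguments.

Theorem corollary2 (R : realFieldType) (n : nat) (CB : seq (Graph R n)) :
  (3 <= n)%N ->
  uniq CB ->
  size CB = 'C(n.-1, 2) ->
  (forall g, g \in CB -> is_three_cycle g 1) ->
  (forall g, g \in CB -> exists u v : 'I_n,
      has_arc g u v /\ (forall h, h \in CB -> h != g -> ~ has_arc h u v)) ->
  free CB /\ (forall g : Graph R n, g \in <<CB>>%VS <-> in_C g).
Proof.
move=> n3 uCB sCB cyc priv.
have fCB := free_private uCB priv.
have WC : forall g, g \in <<CB>>%VS -> in_C g.
  apply: span_pred; [exact: inC0 | exact: inCL |].
  by move=> x /cyc [a [b [c [ab bc ac ->]]]]; exact: three_cycle_inC.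
split => // g; split => [/WC //| gC].
move: n n3 CB uCB sCB cyc priv fCB WC g gC => [//|m] _ CB uCB sCB cyc priv fCB WC g gC.
set W := <<CB>>%VS; set S := <<potX R m>>%VS.
have dW : \dim W = 'C(m, 2) by rewrite -sCB; apply/eqP.
have dS : \dim S = m by rewrite (eqP (potX_free R m)) size_tuple.
have cap : (W :&: S = 0)%VS.
  apply/eqP; rewrite -subv0; apply/subvP => x /memv_capP[xW xS]; rewrite memv0.
  by apply/eqP/inner_self0; apply: WC => //; exact: potX_ST.
have full : (W + S)%VS = fullv.
  apply/eqP; rewrite eqEdim subvf /=.
  have := dimv_sum_cap W S; rewrite cap dimv0 addn0 dW dS => ->.
  by rewrite dim_Graph binS bin1.
have : g \in (W + S)%VS by rewrite full memvf.
move=> /memv_addP[w wW [s sS gws]].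
have sST := potX_ST sS.
have : inner g s = 0 by exact: gC.
rewrite gws -[w]scale1r innerL mul1r (WC w wW s sST) add0r => /inner_self0 s0.
have -> : 1 *: w + s = w by rewrite s0 addr0 scale1r.
exact: wW.
Qed.
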